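(* Let $R\subseteq S_n$ be a top-$k$ partial ranking with $n-k\ge2$, let $\sigma_0\in R$ be fixed, and let $\sigma$ be uniformly distributed on $R$. Put $X=d(\sigma,\sigma_0)$ and $Y=d(A_R(\sigma),\sigma_0)$. Then $\mathrm{Cov}(X,Y)<0$.
   Context: $S_n$ is the symmetric group on $[n]$; $\sigma\in S_n$ is identified with the full ranking $\sigma(1)\succ\cdots\succ\sigma(n)$. For distinct items $x,y$, $\{x,y\}$ is discordant for $\sigma,\tau$ if $(\sigma^{-1}(x)-\sigma^{-1}(y))(\tau^{-1}(x)-\tau^{-1}(y))<0$. The Kendall distance $d(\sigma,\tau)$ is the number of unordered discordant pairs. For $0\le k\le n$ and distinct $a_1,\dots,a_k\in[n]$, the top-$k$ partial ranking is the set $R=\{\sigma\in S_n:\sigma(i)=a_i,\ i\le k\}$ ($R=S_n$ when $k=0$). The antithetic operator $A_R:R\to R$ is $A_R(\sigma)(i)=a_i$ for $i\le k$ and $A_R(\sigma)(k+j)=\sigma(n+1-j)$ for $j=1,\dots,n-k$. *)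

(* Defs.v *)
From HB Require Import structures.
From mathcomp Require Import all_boot all_order all_algebra all_fingroup.
From Stdlib Require Import Lia.
Set Implicit Arguments. Unset Strict Implicit. Unset Printing Implicit Defensive.
Import Order.TTheory GRing.Theory Num.Theory.

(* A permutation s : 'S_n is the full ranking s(0) > s(1) > ... > s(n-1)
   (positions are 0-indexed): s maps positions to items, s^-1 maps items
   to positions. *)

Definition kendall n (s t : 'S_n) : nat :=
  #|[set p : 'I_n * 'I_n | (p.1 < p.2)%N &&
      ((((nat_of_ord ((s^-1)%g p.1))%:Z - (nat_of_ord ((s^-1)%g p.2))%:Z) *
        ((nat_of_ord ((t^-1)%g p.1))%:Z - (nat_of_ord ((t^-1)%g p.2))%:Z)) < 0)%R]|.

Definition topk n k (a : 'I_k -> 'I_n) : {set 'S_n} :=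
  [set s : 'S_n | [forall i : 'I_k, forall p : 'I_n,
                    (nat_of_ord p == nat_of_ord i) ==> (s p == a i)]].

Definition antipos n k (p : 'I_n) : 'I_n :=
  if (p < k)%N then p else insubd p (n + k - 1 - p)%N.

Lemma antipos_val n k (p : 'I_n) :
  nat_of_ord (antipos k p) = if (p < k)%N then nat_of_ord p else (n + k - 1 - p)%N.
Proof.
rewrite /antipos; case: ltnP => // kp.
rewrite val_insubd; case: ifP => // /negP; elim.
have := ltn_ord p => pn.
move/ssrnat.leP: kp => kp; move/ssrnat.ltP: pn => pn; apply/ssrnat.ltP.
rewrite -!minusE -plusE; lia.
Qed.

Lemma antipos_inj n k : injective (@antipos n k).
Proof.
move=> p q e0; apply: val_inj; change (nat_of_ord p = nat_of_ord q).
have e := congr1 val e0; rewrite /= !antipos_val in e.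
have := ltn_ord p; have := ltn_ord q. move: e.
case: (ltnP p k); case: (ltnP q k) => /ssrnat.leP h1 /ssrnat.leP h2 e /ssrnat.ltP h3 /ssrnat.ltP h4.
all: rewrite -?minusE -?plusE in e; try lia.
Qed.

Definition antiperm n k : 'S_n := perm (@antipos_inj n k).

(* Antithetic operator: A_R(s)(p) = s(antipos p).  For s in the top-k ranking
   R this is exactly the paper's A_R: A_R(s)(i) = a_i for i < k and
   A_R(s)(k+j) = s(n+1-j) (1-indexed). *)
Definition antithetic n k (s : 'S_n) : 'S_n := (antiperm n k * s)%g.

Lemma antitheticE n k (s : 'S_n) p : antithetic k s p = s (antipos k p).
Proof. by rewrite /antithetic permM permE. Qed.

Definition unif_mean n (R : {set 'S_n}) (f : 'S_n -> rat) : rat :=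
  ((\sum_(s in R) f s) / (#|R|)%:R)%R.

Definition unif_cov n (R : {set 'S_n}) (X Y : 'S_n -> nat) : rat :=
  (unif_mean R (fun s => (X s * Y s)%:R)
   - unif_mean R (fun s => (X s)%:R) * unif_mean R (fun s => (Y s)%:R))%R.

(* Main.v *)
Require Import Defs.
From mathcomp Require Import all_boot all_order all_algebra all_fingroup.
From mathcomp Require Import zify ring lra.
Import Order.TTheory GRing.Theory Num.Theory.
Unset Implicit Arguments.

Lemma int_sub_lemma (n k u v : nat) : (u < n)%N -> (v < n)%N -> (k <= u)%N -> (k <= v)%N ->
 (((n + k - 1 - u)%N%:Z - (n + k - 1 - v)%N%:Z) = - (u%:Z - v%:Z))%R.
Proof. move=> *. lia. Qed.

Section S.
Variables (n k : nat) (a : 'I_k -> 'I_n) (hkn : (k <= n)%N).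

Lemma topkP (s : 'S_n) : s \in topk a ->
  forall (i : 'I_k) (p : 'I_n), nat_of_ord p = nat_of_ord i -> s p = a i.
Proof.
rewrite inE => /forallP h i p e.
by have /forallP/(_ p)/implyP/(_ (introT eqP e))/eqP := h i.
Qed.

Lemma topk_pos (s : 'S_n) (i : 'I_k) : s \in topk a ->
  nat_of_ord ((s^-1)%g (a i)) = i.
Proof.
move=> hs.
have hi : (i < n)%N by apply: leq_trans hkn.
by rewrite -(topkP _ hs i (Ordinal hi)) // permK.
Qed.

Definition bot (x : 'I_n) := [forall i, a i != x].

Lemma topk_bot (s : 'S_n) x : s \in topk a -> bot x -> (k <= (s^-1)%g x)%N.
Proof.
move=> hs /forallP hb; case: ltnP => // h.
have := topkP _ hs (Ordinal h) ((s^-1)%g x) (erefl _); rewrite permKV => e.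
by move: (hb (Ordinal h)); rewrite -e eqxx.
Qed.

Lemma topk_anti (s : 'S_n) : s \in topk a -> antithetic k s \in topk a.
Proof.
move=> hs; rewrite inE; apply/forallP => i; apply/forallP => p; apply/implyP => /eqP e.
rewrite antitheticE; apply/eqP/(topkP _ hs); rewrite antipos_val e ltn_ord //.
Qed.

Lemma int_test (d1 d2 : int) : d1 != 0 -> d2 != 0 ->
  ((- d1) * d2 < 0)%R = ~~ (d1 * d2 < 0)%R.
Proof. move=> h1 h2. by rewrite mulNr oppr_lt0 lt_def mulf_neq0 // -leNgt. Qed.

Lemma antipos_invol (q : 'I_n) : antipos k (antipos k q) = q.
Proof.
apply: val_inj => /=; rewrite !antipos_val; have := ltn_ord q.
case: (ltnP q k) => h1 h2; first by rewrite h1.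
case: ifP => h3; lia.
Qed.

Lemma antiperm_inv : ((antiperm n k)^-1)%g = antiperm n k.
Proof.
apply/permP => q; apply: (@perm_inj _ (antiperm n k)).
by rewrite permKV !permE antipos_invol.
Qed.

Lemma anti_inv (s : 'S_n) x :
  ((antithetic k s)^-1)%g x = antipos k ((s^-1)%g x).
Proof. by rewrite /antithetic invMg permM antiperm_inv permE. Qed.

Definition disc (s t : 'S_n) (p : 'I_n * 'I_n) : bool :=
      ((((nat_of_ord ((s^-1)%g p.1))%:Z - (nat_of_ord ((s^-1)%g p.2))%:Z) *
        ((nat_of_ord ((t^-1)%g p.1))%:Z - (nat_of_ord ((t^-1)%g p.2))%:Z)) < 0)%R.

Lemma disc_nonbot s t x y : s \in topk a -> t \in topk a ->
  ~~ (bot x && bot y) -> ~~ disc s t (x, y).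
Proof.
move=> hs ht; rewrite /disc /=.
case bx: (bot x); case by_: (bot y) => //= _.
- move/negbT: by_; rewrite negb_forall => /existsP [j]; rewrite negbK => /eqP <-.
  rewrite !topk_pos //.
  have := topk_bot s x hs bx; have := topk_bot t x ht bx; have := ltn_ord j.
  move=> *; rewrite -leNgt; nia.
- move/negbT: bx; rewrite negb_forall => /existsP [i]; rewrite negbK => /eqP <-.
  rewrite !topk_pos //.
  have := topk_bot s y hs by_; have := topk_bot t y ht by_; have := ltn_ord i.
  move=> *; rewrite -leNgt; nia.
- move/negbT: bx; rewrite negb_forall => /existsP [i]; rewrite negbK => /eqP <-.
  move/negbT: by_; rewrite negb_forall => /existsP [j]; rewrite negbK => /eqP <-.
  rewrite !topk_pos // -leNgt; by rewrite -expr2 sqr_ge0.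
Qed.

Lemma disc_bot s t x y : s \in topk a -> bot x -> bot y -> x != y ->
  disc (antithetic k s) t (x, y) = ~~ disc s t (x, y).
Proof.
move=> hs bx by_ xy; rewrite /disc /= !anti_inv !antipos_val.
have hx := topk_bot s x hs bx; have hy := topk_bot s y hs by_.
rewrite !ltnNge hx hy /=.
have := ltn_ord ((s^-1)%g x); have := ltn_ord ((s^-1)%g y) => h1 h2.
have -> : (((n + k - 1 - (s^-1)%g x)%N%:Z - (n + k - 1 - (s^-1)%g y)%N%:Z) =
   - (((s^-1)%g x)%:Z - ((s^-1)%g y)%:Z))%R.
  by apply: int_sub_lemma.
apply: int_test.
- rewrite subr_eq0 eqz_nat; apply: contra xy => /eqP/val_inj/perm_inj ->. by [].
- rewrite subr_eq0 eqz_nat; apply: contra xy => /eqP/val_inj/perm_inj ->. by [].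
Qed.

Definition BP := [set p : 'I_n * 'I_n | [&& (p.1 < p.2)%N, bot p.1 & bot p.2]].
Definition K s t := [set p : 'I_n * 'I_n | (p.1 < p.2)%N && disc s t p].

Lemma kendallK (s t : 'S_n) : kendall s t = #|K s t|.
Proof. by []. Qed.

Lemma K_sub s t : s \in topk a -> t \in topk a -> K s t \subset BP.
Proof.
move=> hs ht; apply/subsetP => [[x y]]; rewrite !inE /= => /andP [-> hd] /=.
by apply: contraLR hd => h; apply: disc_nonbot.
Qed.

Lemma K_anti s t : s \in topk a -> t \in topk a -> K (antithetic k s) t = BP :\: K s t.
Proof.
move=> hs ht; apply/setP => [[x y]]; rewrite !inE /=.
case xy: (x < y)%N; rewrite /= ?andbF //.
case bx: (bot x); case by_: (bot y); rewrite /=.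
- rewrite disc_bot ?andbT //; apply: contraTneq xy => ->; by rewrite ltnn.
all: rewrite andbF; apply: negbTE; apply: disc_nonbot => //; [exact: topk_anti | by rewrite bx by_].
Qed.

Lemma kendall_sum s t : s \in topk a -> t \in topk a ->
  (kendall (antithetic k s) t + kendall s t)%N = #|BP|.
Proof.
move=> hs ht; rewrite !kendallK K_anti // cardsD.
have /setIidPr -> := K_sub s t hs ht.
rewrite subnK //; exact: subset_leq_card (K_sub s t hs ht).
Qed.

Lemma kendall0 (t : 'S_n) : kendall t t = 0%N.
Proof.
rewrite kendallK; apply/eqP; rewrite cards_eq0; apply/eqP/setP => p.
by rewrite !inE /disc -expr2 ltNge sqr_ge0 andbF.
Qed.

Lemma BP_pos (t : 'S_n) : t \in topk a -> (k.+2 <= n)%N -> (0 < #|BP|)%N.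
Proof.
move=> ht hn.
have hb : forall q : 'I_n, (k <= q)%N -> bot (t q).
  move=> q hq; apply/forallP => i; apply/eqP => e.
  have := topk_pos t i ht; rewrite e permK => e2.
  by move: (ltn_ord i); rewrite -e2 ltnNge hq.
have hp : (k < n)%N by lia.
have hq : (k.+1 < n)%N by lia.
have hu := hb (Ordinal hp) (leqnn k).
have hv := hb (Ordinal hq) (leqnSn k).
have ne : t (Ordinal hp) != t (Ordinal hq).
  by apply/eqP => /perm_inj /(congr1 val) /= /eqP; rewrite -[k.+1]addn1 -{1}[k]addn0 eqn_add2l.
apply/card_gt0P.
case: (ltngtP (t (Ordinal hp)) (t (Ordinal hq))) => h.
- by exists (t (Ordinal hp), t (Ordinal hq)); rewrite inE /= h hu hv.
- by exists (t (Ordinal hq), t (Ordinal hp)); rewrite inE /= h hu hv.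
- by move: ne; rewrite (val_inj h) eqxx.
Qed.
End S.


Section VP.
Local Open Scope ring_scope.
Lemma var_pos (T : finType) (R : {set T}) (x : T -> rat) s1 s2 :
  s1 \in R -> s2 \in R -> x s1 != x s2 ->
  (\sum_(s in R) x s) ^+ 2 < #|R|%:R * \sum_(s in R) x s ^+ 2.
Proof.
move=> h1 h2 hne.
set N : rat := #|R|%:R; set S1 := \sum_(s in R) x s; set S2 := \sum_(s in R) x s ^+ 2.
have Npos : 0 < N by rewrite ltr0n; apply/card_gt0P; exists s1.
have E : \sum_(s in R) (N * x s - S1) ^+ 2 = N * (N * S2 - S1 ^+ 2).
  transitivity (\sum_(s in R) ((N ^+ 2) * x s ^+ 2 - (2 * N * S1) * x s + S1 ^+ 2)).
    by apply: eq_bigr => s _; ring.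
  rewrite big_split sumrB /= -!mulr_sumr sumr_const -/S1 -/S2 -/N.
  rewrite -[S1 *+ _]mulr_natr -/N; ring.
have Sge : 0 <= \sum_(s in R) (N * x s - S1) ^+ 2 by apply: sumr_ge0 => s _; exact: sqr_ge0.
have Sgt : 0 < \sum_(s in R) (N * x s - S1) ^+ 2.
  rewrite lt_def Sge andbT; apply/eqP => H.
  have Z := psumr_eq0P (fun s _ => sqr_ge0 (N * x s - S1)) H.
  move: (Z s1 h1) (Z s2 h2) => /eqP; rewrite sqrf_eq0 subr_eq0 => /eqP e1 /eqP.
  rewrite sqrf_eq0 subr_eq0 -e1 => /eqP /(mulfI (lt0r_neq0 Npos)) e2.
  by move: hne; rewrite e2 eqxx.
rewrite -subr_gt0 -(pmulr_rgt0 _ Npos) -E //.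
Qed.
End VP.


Theorem proposition2 (n k : nat) (a : 'I_k -> 'I_n) (a_inj : injective a)
  (hnk : (2 <= n - k)%N) (sigma0 : 'S_n) (hs0 : sigma0 \in topk a) :
  (unif_cov (topk a) (fun s => kendall s sigma0)
                     (fun s => kendall (antithetic k s) sigma0) < 0)%R.
Proof.
Local Open Scope ring_scope.
have hkn : (k <= n)%N by lia.
have hn : (k.+2 <= n)%N by lia.
set c := #|BP n k a|.
have HY : forall s, s \in topk a ->
    ((kendall (antithetic k s) sigma0)%:R = c%:R - (kendall s sigma0)%:R :> rat).
  by move=> s hs; rewrite /c -(kendall_sum n k a hkn s sigma0 hs hs0) natrD addrK.
rewrite /unif_cov /unif_mean.
rewrite (eq_bigr (fun s => (kendall s sigma0)%:R * (c%:R - (kendall s sigma0)%:R))); last first.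
  by move=> s hs; rewrite natrM HY.
rewrite [X in _ * (X / _)](eq_bigr (fun s => c%:R - (kendall s sigma0)%:R)); last first.
  by move=> s hs; rewrite HY.
set x := fun s : 'S_n => (kendall s sigma0)%:R : rat.
have hne : x sigma0 != x (antithetic k sigma0).
  rewrite /x kendall0.
  have := kendall_sum n k a hkn sigma0 sigma0 hs0 hs0; rewrite kendall0 addn0 => ->.
  rewrite eq_sym pnatr_eq0 -lt0n; exact: BP_pos n k a hkn sigma0 hs0 hn.
have key := var_pos _ (topk a) x _ _ hs0 (topk_anti n k a sigma0 hs0) hne.
have Npos : (0 < (#|topk a|)%:R :> rat) by rewrite ltr0n; apply/card_gt0P; exists sigma0.
move: key Npos.
set N : rat := (#|topk a|)%:R.
have E1 : \sum_(s in topk a) x s * (c%:R - x s) = c%:R * \sum_(s in topk a) x s - \sum_(s in topk a) x s ^+ 2.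
  by rewrite mulr_sumr -sumrB; apply: eq_bigr => s _; rewrite /x; ring.
have E2 : \sum_(s in topk a) (c%:R - x s) = c%:R * N - \sum_(s in topk a) x s.
  by rewrite sumrB sumr_const mulr_natr.
rewrite /x in E1 E2 *. rewrite E1 E2.
set S1 := \sum_(s in topk a) _. set S2 := \sum_(s in topk a) _.
move=> key Npos.
have -> : (c%:R * S1 - S2) / N - S1 / N * ((c%:R * N - S1) / N) = (S1 ^+ 2 - N * S2) / (N ^+ 2).
  by field; rewrite lt0r_neq0.
by rewrite ltr_pdivrMr ?exprn_gt0 // mul0r subr_lt0.
Qed.
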